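(* Let $\sigma$ be a finite relational signature and let $\mathcal{A}$ and $\mathcal{B}$ be finite $\sigma$-structures with domains $A$ and $B$. The following are equivalent: (I) there is a surjective homomorphism from $\mathcal{A}^{|A|^{|B|}}$ to $\mathcal{B}$; (II) there exists a positive integer $r<\omega$ such that there is a surjective homomorphism from $\mathcal{A}^r$ to $\mathcal{B}$; (III) $\mathrm{QCSP}(\mathcal{A}) \subseteq \mathrm{QCSP}(\mathcal{B})$; (IV) $\Pi_2\text{-}\mathrm{CSP}(\mathcal{A}) \subseteq \Pi_2\text{-}\mathrm{CSP}(\mathcal{B})$.
   Context: A homomorphism $h:\mathcal{A}\to\mathcal{B}$ is a map $A\to B$ such that for every $p$-ary $R\in\sigma$, $(a_1,\dots,a_p)\in R^{\mathcal{A}}$ implies $(h(a_1),\dots,h(a_p))\in R^{\mathcal{B}}$. For a cardinal $m$, $\mathcal{A}^m$ is the direct (categorical) power: domain $A^m$, and a tuple of elements is in $R^{\mathcal{A}^m}$ iff it is in $R^{\mathcal{A}}$ coordinatewise. A positive Horn (pH) sentence is a first-order sentence built from atomic formulas (relational atoms of $\sigma$ and equalities) using only $\exists$, $\forall$ and $\wedge$; it can be put in prenex form $\forall \bar x_1\exists\bar y_1\cdots\forall\bar x_k\exists\bar y_k\,P$ with $P$ a conjunction of atoms. $\mathrm{QCSP}(\mathcal{A})$ denotes the set of pH sentences true in $\mathcal{A}$; $\Pi_2\text{-}\mathrm{CSP}(\mathcal{A})$ denotes the set of pH sentences of the form $\forall\bar x_1\exists\bar y_1\,P$ ($P$ a conjunction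 of atoms) true in $\mathcal{A}$. *)

(* Defs.v *)
From mathcomp Require Import all_boot.
Set Implicit Arguments. Unset Strict Implicit. Unset Printing Implicit Defensive.

Record structure (S : finType) (ar : S -> nat) := Structure {
  dom : finType;
  rel : forall s : S, pred {ffun 'I_(ar s) -> dom}
}.
Arguments Structure {S ar}.
Arguments dom {S ar}.
Arguments rel {S ar}.

Section Structures.
Variables (S : finType) (ar : S -> nat).

Definition is_hom (A B : structure ar) (h : dom A -> dom B) : Prop :=
  forall (s : S) (t : {ffun 'I_(ar s) -> dom A}),
    rel A s t -> rel B s [ffun i => h (t i)].

Definition surj (X Y : Type) (h : X -> Y) : Prop := forall y, exists x, h x = y.

Definition pow_structure (A : structure ar) (m : nat) : structure ar :=
  Structure {ffun 'I_m -> dom A}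
    (fun s (t : {ffun 'I_(ar s) -> {ffun 'I_m -> dom A}}) =>
       [forall k : 'I_m, rel A s [ffun i => t i k]]).

(* positive Horn formulas over variables indexed by nat *)
Inductive pH : Type :=
  | pAtom (s : S) (v : 'I_(ar s) -> nat)
  | pEq (x y : nat)
  | pAnd (f g : pH)
  | pEx (x : nat) (f : pH)
  | pAll (x : nat) (f : pH).

Fixpoint fv (f : pH) : seq nat :=
  match f with
  | pAtom s v => [seq v i | i <- enum 'I_(ar s)]
  | pEq x y => [:: x; y]
  | pAnd f g => fv f ++ fv g
  | pEx x f => filter (predC1 x) (fv f)
  | pAll x f => filter (predC1 x) (fv f)
  end.

Definition sentence (f : pH) : Prop := fv f = [::].

Definition upd (T : Type) (e : nat -> T) (x : nat) (a : T) : nat -> T :=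
  fun y => if y == x then a else e y.

Fixpoint sat (A : structure ar) (e : nat -> dom A) (f : pH) {struct f} : Prop :=
  match f with
  | pAtom s v => rel A s [ffun i => e (v i)]
  | pEq x y => e x = e y
  | pAnd f1 f2 => sat e f1 /\ sat e f2
  | pEx x f1 => exists a : dom A, sat (upd e x a) f1
  | pAll x f1 => forall a : dom A, sat (upd e x a) f1
  end.

Definition holds (A : structure ar) (f : pH) : Prop :=
  forall e : nat -> dom A, @sat A e f.

Definition QCSP (A : structure ar) (f : pH) : Prop := sentence f /\ holds A f.

Fixpoint is_conj_atoms (f : pH) : bool :=
  match f with
  | pAtom _ _ | pEq _ _ => true
  | pAnd f g => is_conj_atoms f && is_conj_atoms g
  | _ => false
  end.

Fixpoint is_ex_block (f : pH) : bool :=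
  match f with
  | pEx _ g => is_ex_block g
  | _ => is_conj_atoms f
  end.

Fixpoint is_Pi2 (f : pH) : bool :=
  match f with
  | pAll _ g => is_Pi2 g
  | _ => is_ex_block f
  end.

Definition Pi2CSP (A : structure ar) (f : pH) : Prop :=
  [/\ sentence f, is_Pi2 f & holds A f].

End Structures.

(* Main.v *)
Require Import Defs.
From mathcomp Require Import all_boot.
From mathcomp Require Import zify.
From Stdlib Require List.

Section Aux.
Variables (S : finType) (ar : S -> nat).

Lemma sat_ext (A : structure ar) (f : pH ar) (e e' : nat -> dom A) :
  (forall n, e n = e' n) -> sat e f -> sat e' f.
Proof.
elim: f e e' => [s v|x y|f IHf g IHg|x f IHf|x f IHf] e e' He /=.
- have -> : [ffun i => e' (v i)] = [ffun i => e (v i)].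
    by apply/ffunP=> i; rewrite !ffunE He.
  exact: id.
- by move=> H; rewrite -He -(He y) H.
- by case=> H1 H2; split; [apply: (IHf e) | apply: (IHg e)].
- case=> a Ha; exists a; apply: (IHf _ _ _ Ha) => y; rewrite /upd; case: ifP => // _; exact: He.
- move=> H a; apply: (IHf _ _ _ (H a)) => y; rewrite /upd; case: ifP => // _; exact: He.
Qed.

Lemma sat_hom (A B : structure ar) (h : dom A -> dom B) (f : pH ar) :
  @is_hom S ar A B h -> surj h ->
  forall e e', (forall n, e' n = h (e n)) -> sat e f -> sat e' f.
Proof.
move=> Hh Hs.
elim: f => [s v|x y|f IHf g IHg|x f IHf|x f IHf] e e' He /=.
- move=> /Hh H.
  have -> : [ffun i => e' (v i)] = [ffun i => h ([ffun i => e (v i)] i)].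
    by apply/ffunP=> i; rewrite !ffunE He.
  exact: id.
- by rewrite !He => ->.
- by case=> H1 H2; split; [apply: (IHf e) | apply: (IHg e)].
- case=> a Ha; exists (h a); apply: (IHf _ _ _ Ha) => y; rewrite /upd; case: ifP => // _; exact: He.
- move=> H b; have [a <-] := Hs b.
  apply: (IHf _ _ _ (H a)) => y; rewrite /upd; case: ifP => // _; exact: He.
Qed.

Lemma sat_pow (A : structure ar) r (f : pH ar) (e : nat -> {ffun 'I_r -> dom A}) :
  (forall k, sat (fun n => e n k) f) -> @sat S ar (pow_structure A r) e f.
Proof.
elim: f e => [s v|x y|f IHf g IHg|x f IHf|x f IHf] e /= H.
- apply/forallP=> k.
  have -> : [ffun i => [ffun i0 => e (v i0)] i k] = [ffun i => e (v i) k].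
    by apply/ffunP=> i; rewrite !ffunE.
  exact: H.
- by apply/ffunP=> k; apply: H.
- by split; apply: IHf || apply: IHg; move=> k; case: (H k).
- have /fin_all_exists [g Hg] := H.
  exists [ffun k => g k]; apply: IHf => k.
  apply: sat_ext (Hg k) => y; rewrite /upd; case: ifP => //; by rewrite ffunE.
- move=> a; apply: IHf => k.
  apply: sat_ext (H k (a k)) => y; rewrite /upd; case: ifP => //; by rewrite ffunE.
Qed.

Lemma sat_bigAnd (A : structure ar) (e : nat -> dom A) b (l : seq (pH ar)) :
  sat e (foldr (@pAnd S ar) b l) <-> sat e b /\ (forall g, List.In g l -> sat e g).
Proof.
elim: l => [|g l IH] /=; split.
- by move=> H; split.
- by case.
- case=> Hg /IH [Hb Hl]; split=> // g' [<-|]; [done|apply: Hl].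
- case=> Hb Hl; split; first by apply: Hl; left.
  by apply/IH; split=> // g' Hg'; apply: Hl; right.
Qed.

Lemma sat_ex_intro (A : structure ar) (e e' : nat -> dom A) body xs :
  (forall y, y \notin xs -> e' y = e y) -> sat e' body ->
  sat e (foldr (@pEx S ar) body xs).
Proof.
elim: xs e => [|x xs IH] e He Hb /=.
- by apply: sat_ext Hb => y; apply: He.
- exists (e' x); apply: IH Hb => y Hy; rewrite /upd; case: eqP => [->//|/eqP yx].
  by apply: He; rewrite inE negb_or yx Hy.
Qed.

Lemma sat_ex_elim (A : structure ar) (e : nat -> dom A) body xs :
  sat e (foldr (@pEx S ar) body xs) ->
  exists e', sat e' body /\ forall y, y \notin xs -> e' y = e y.
Proof.
elim: xs e => [|x xs IH] e /=.
- by move=> H; exists e.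
- case=> a /IH [e' [Hb He]]; exists e'; split=> // y.
  rewrite inE negb_or => /andP[yx yxs]; by rewrite He // /upd (negbTE yx).
Qed.

Lemma sat_all_intro (A : structure ar) (e : nat -> dom A) body xs :
  (forall e', (forall y, y \notin xs -> e' y = e y) -> sat e' body) ->
  sat e (foldr (@pAll S ar) body xs).
Proof.
elim: xs e => [|x xs IH] e H /=.
- by apply: H.
- move=> a; apply: IH => e' He'; apply: H => y.
  rewrite inE negb_or => /andP[yx yxs]; by rewrite He' // /upd (negbTE yx).
Qed.

Lemma sat_all_elim (A : structure ar) (e : nat -> dom A) body xs :
  sat e (foldr (@pAll S ar) body xs) ->
  forall e', (forall y, y \notin xs -> e' y = e y) -> sat e' body.
Proof.
elim: xs e => [|x xs IH] e /= H e' He'.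
- by apply: sat_ext H => y; rewrite He'.
- apply: (IH _ (H (e' x))) => y Hy; rewrite /upd; case: eqP => [->//|/eqP yx].
  by apply: He'; rewrite inE negb_or yx Hy.
Qed.

Lemma fv_all v (g : pH ar) xs :
  v \in fv (foldr (@pAll S ar) g xs) -> v \in fv g /\ v \notin xs.
Proof.
elim: xs => [|x xs IH] //=.
rewrite mem_filter /= => /andP[vx /IH[H1 H2]]; split=> //.
by rewrite inE negb_or vx.
Qed.

Lemma fv_ex v (g : pH ar) xs :
  v \in fv (foldr (@pEx S ar) g xs) -> v \in fv g /\ v \notin xs.
Proof.
elim: xs => [|x xs IH] //=.
rewrite mem_filter /= => /andP[vx /IH[H1 H2]]; split=> //.
by rewrite inE negb_or vx.
Qed.

Lemma fv_and v b (l : seq (pH ar)) :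
  v \in fv (foldr (@pAnd S ar) b l) ->
  v \in fv b \/ exists g, List.In g l /\ v \in fv g.
Proof.
elim: l => [|g l IH] /=; first by left.
rewrite mem_cat => /orP[H|/IH[H|[g' [Hg' H]]]].
- by right; exists g; split=> //; left.
- by left.
- by right; exists g'; split=> //; right.
Qed.

Lemma conj_bigAnd b (l : seq (pH ar)) :
  is_conj_atoms b -> (forall g, List.In g l -> is_conj_atoms g) ->
  is_conj_atoms (foldr (@pAnd S ar) b l).
Proof.
elim: l => [|g l IH] //= Hb Hl.
rewrite Hl; last by left.
by apply: IH => // g' Hg'; apply: Hl; right.
Qed.

Lemma Pi2_build (P : pH ar) xs ys :
  is_conj_atoms P -> is_Pi2 (foldr (@pAll S ar) (foldr (@pEx S ar) P ys) xs).
Proof.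
move=> HP.
have H1 : is_ex_block (foldr (@pEx S ar) P ys).
  by elim: ys => [|y ys IH] //=; case: P HP.
have H2 : is_Pi2 (foldr (@pEx S ar) P ys).
  by move: H1; case: (foldr _ _ _).
by elim: xs.
Qed.

Lemma In_enum (T : finType) (x : T) : List.In x (enum T).
Proof.
have : x \in enum T by rewrite mem_enum.
elim: (enum T) => //= y s IH; rewrite inE => /orP[/eqP->|/IH H]; [by left|by right].
Qed.

End Aux.

Lemma iv_i (S : finType) (ar : S -> nat) (A B : structure ar)
  (hA : 0 < #|dom A|) (hB : 0 < #|dom B|) :
  (forall f : pH ar, Pi2CSP A f -> Pi2CSP B f) ->
  exists h, @is_hom S ar (pow_structure A (#|dom A| ^ #|dom B|)) B h /\ surj h.
Proof.
move=> HIV.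
set n := #|dom B|. set m := #|dom A| ^ n.
have [a0 _] := card_gt0P hA.
have [b0 _] := card_gt0P hB.
pose F := {ffun 'I_n -> dom A}.
pose G := {ffun 'I_m -> dom A}.
pose E (k : 'I_m) : F := nth [ffun=> a0] (enum F) k.
have ES : forall a : F, exists k : 'I_m, E k = a.
  move=> a.
  have Hs : size (enum F) = m by rewrite -cardE card_ffun card_ord.
  have Hi : index a (enum F) < m by rewrite -Hs index_mem mem_enum.
  by exists (Ordinal Hi); rewrite /E /= nth_index // mem_enum.
pose p (i : 'I_n) : G := [ffun k => E k i].
pose N := #|G|.
pose rk (g : G) : nat := n + enum_rank g.
pose Latoms := List.flat_map (fun s =>
   List.map (fun t : {ffun 'I_(ar s) -> G} => @pAtom S ar s (fun j => rk (t j)))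
     (List.filter (fun t => Defs.rel (pow_structure A m) s t) (enum {ffun 'I_(ar s) -> G})))
   (enum S).
pose Leq := List.map (fun i : 'I_n => @pEq S ar (val i) (rk (p i))) (enum 'I_n).
pose L := List.app Latoms Leq.
pose P := foldr (@pAnd S ar) (@pEq S ar 0 0) L.
pose phi := foldr (@pAll S ar) (foldr (@pEx S ar) P (iota n N)) (iota 0 n).
have InL : forall g, List.In g L ->
   (exists s (t : {ffun 'I_(ar s) -> G}), Defs.rel (pow_structure A m) s t /\
        g = @pAtom S ar s (fun j => rk (t j)))
   \/ (exists i : 'I_n, g = @pEq S ar (val i) (rk (p i))).
  move=> g /List.in_app_iff [Hg|Hg].
  - left; move/List.in_flat_map: Hg => [s [_ /List.in_map_iff [t [<- /List.filter_In [_ Ht]]]]].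
    by exists s, t.
  - right; move/List.in_map_iff: Hg => [i [<- _]]; by exists i.
have Hsent : sentence phi.
  rewrite /sentence; case E' : (fv phi) => [|v vs] //.
  have : v \in fv phi by rewrite E' inE eqxx.
  move/fv_all => [/fv_ex [Hv Hvn] Hv0].
  have Hlt : v < n + N.
    case/fv_and: Hv => [|[g [/InL Hg Hvg]]].
    - by rewrite !inE orbb => /eqP->; rewrite addn_gt0 hB.
    - case: Hg => [[s [t [_ Eg]]]|[i Eg]]; subst g.
      + by case/mapP: Hvg => j _ ->; rewrite /rk ltn_add2l ltn_ord.
      + move: Hvg; rewrite !inE => /orP[/eqP->|/eqP->].
        * by apply: leq_trans (ltn_ord i) (leq_addr _ _).
        * by rewrite /rk ltn_add2l ltn_ord.
  move: Hvn Hv0 Hlt; rewrite !mem_iota; lia.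
have HPi2 : is_Pi2 phi.
  apply: Pi2_build; apply: conj_bigAnd => // g /InL [[s [t [_ ->]]]|[i ->]] //.
have HholdsA : holds A phi.
  move=> e; apply: sat_all_intro => e' _.
  pose a : F := [ffun i => e' (val i)].
  have [k Ek] := ES a.
  pose e'' y := if (n <= y < n + N) then (nth [ffun=> a0] (enum G) (y - n)) k else e' y.
  have Hrk : forall g : G, e'' (rk g) = g k.
    move=> g; rewrite /e'' /rk leq_addr ltn_add2l ltn_ord /= addKn.
    by rewrite nth_enum_rank.
  apply: (@sat_ex_intro _ _ _ e' e'').
    by move=> y; rewrite /e'' mem_iota => /negbTE ->.
  apply/sat_bigAnd; split; first by [].
  move=> g /InL [[s [t [Ht ->]]]|[i ->]] /=.
  - have -> : [ffun j => e'' (rk (t j))] = [ffun j => t j k].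
      by apply/ffunP=> j; rewrite !ffunE Hrk.
    by move/forallP: Ht => /(_ k).
  - rewrite Hrk /p ffunE Ek /a ffunE /e''.
    by have -> : (n <= val i) = false by apply/negbTE; rewrite -ltnNge ltn_ord.
have [_ _ HholdsB] := HIV phi (And3 Hsent HPi2 HholdsA).
pose eB y := if y < n then nth b0 (enum (dom B)) y else b0.
have H1 := @sat_all_elim S ar B (fun _ => b0) _ _ (HholdsB (fun _ => b0)) eB.
have [e'' [HP He'']] : exists e'', sat e'' P /\ forall y, y \notin iota n N -> e'' y = eB y.
  apply: sat_ex_elim; apply: H1 => y; rewrite mem_iota /eB /=.
  by case: (y < n).
move/sat_bigAnd: HP => [_ HL].
exists (fun g : G => e'' (rk g)); split.
- move=> s t Ht.
  have Hin : List.In (@pAtom S ar s (fun j => rk (t j))) L.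
    apply: List.in_or_app; left; apply/List.in_flat_map; exists s; split; first exact: In_enum.
    apply/List.in_map_iff; exists t; split=> //; apply/List.filter_In; split=> //.
    exact: In_enum.
  exact: (HL _ Hin).
- move=> b.
  have Hi : index b (enum (dom B)) < n by rewrite /n cardE index_mem mem_enum.
  have Hin : List.In (@pEq S ar (index b (enum (dom B))) (rk (p (Ordinal Hi)))) L.
    apply: List.in_or_app; right; apply/List.in_map_iff; exists (Ordinal Hi); split=> //.
    exact: In_enum.
  exists (p (Ordinal Hi)); have /= <- := HL _ Hin.
  rewrite He''; last by rewrite mem_iota leqNgt Hi.
  by rewrite /eB Hi nth_index // mem_enum.
Qed.

Theorem mainTheorem1 (S : finType) (ar : S -> nat) (A B : structure ar)
  (hA : 0 < #|dom A|) (hB : 0 < #|dom B|) :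
  [<-> (exists h, @is_hom S ar (pow_structure A (#|dom A| ^ #|dom B|)) B h /\ surj h);
       (exists r : nat, 0 < r /\
          exists h, @is_hom S ar (pow_structure A r) B h /\ surj h);
       (forall f : pH ar, QCSP A f -> QCSP B f);
       (forall f : pH ar, Pi2CSP A f -> Pi2CSP B f)].
Proof.
tfae.
- move=> H; exists (#|dom A| ^ #|dom B|); split=> //; by rewrite expn_gt0 hA.
- move=> [r [_ [h [Hh Hs]]]] f [Hf HA]; split=> // e'.
  have Hs' : forall n, exists x, h x == e' n.
    by move=> n; case: (Hs (e' n)) => x <-; exists x.
  pose e n := xchoose (Hs' n).
  apply: (@sat_hom S ar (pow_structure A r) B h f Hh Hs e).
    by move=> n; apply/eqP; rewrite eq_sym; exact: (xchooseP (Hs' n)).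
  by apply: sat_pow => k; apply: HA.
- move=> H f [H1 H2 H3]; have [H4 H5] := H f (conj H1 H3); by split.
- exact: iv_i.
Qed.
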